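(* Let $w,w'\in[0,1]$ with $w+w'=1$. For every interval $\textbf{A}=[\underline{a},\overline{a}]\in I(\mathbb{R})$, $(w\underline{a}+w'\overline{a})\odot[\underline{a},\overline{a}]\nprec\textbf{0}$.
   Context: $I(\mathbb{R})$ is the set of closed bounded intervals; for $\lambda\in\mathbb{R}$, $\lambda\odot[\underline{a},\overline{a}]=[\lambda\underline{a},\lambda\overline{a}]$ if $\lambda\ge0$ and $[\lambda\overline{a},\lambda\underline{a}]$ if $\lambda<0$; $\textbf{0}=[0,0]$. $\textbf{A}\prec\textbf{B}$ iff $\underline{a}\le\underline{b}$, $\overline{a}\le\overline{b}$ and $\textbf{A}\ne\textbf{B}$; $\nprec$ is its negation. *)

(* Defs.v *)
From Stdlib Require Export Reals.
Open Scope R_scope.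

(* A closed bounded interval [lo, hi] is represented by the pair (lo, hi);
   membership in I(R) is the side condition lo <= hi (see is_interval). *)
Definition interval : Type := (R * R)%type.

Definition is_interval (A : interval) : Prop := fst A <= snd A.

Definition iscal (l : R) (A : interval) : interval :=
  if Rle_dec 0 l then (l * fst A, l * snd A) else (l * snd A, l * fst A).

Definition izero : interval := (0, 0).

Definition iprec (A B : interval) : Prop :=
  fst A <= fst B /\ snd A <= snd B /\ A <> B.

(* Main.v *)
Require Import Defs.
From Stdlib Require Import Lra Psatz.

Theorem lemma5p1 (w w' : R) (hw : 0 <= w <= 1) (hw' : 0 <= w' <= 1)
  (hsum : w + w' = 1) (alo ahi : R) (hA : is_interval (alo, ahi)) :
  ~ iprec (iscal (w * alo + w' * ahi) (alo, ahi)) izero.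
Proof.
  unfold is_interval in hA; simpl in hA.
  set (l := w * alo + w' * ahi).
  assert (H1 : alo <= l) by (unfold l; nra).
  assert (H2 : l <= ahi) by (unfold l; nra).
  unfold iprec, iscal, izero; simpl.
  destruct (Rle_dec 0 l) as [Hl|Hl]; simpl; intros [Ha [Hb Hc]].
  - destruct (Req_dec l 0) as [E|E].
    + apply Hc. rewrite E. f_equal; ring.
    + assert (0 < l) by lra. nra.
  - nra.
Qed.
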